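(* Let $-D/2\le x_{\rm I}<x_{\rm F}\le D/2$, and let $(r_1^{\rm I},r_2^{\rm I})\in\partial\mathcal{C}_f(x_{\rm I})$ and $(r_1^{\rm F},r_2^{\rm F})\in\partial\mathcal{C}_f(x_{\rm F})$ be the points at which the upper-right common tangent line of $\mathcal{C}_f(x_{\rm I})$ and $\mathcal{C}_f(x_{\rm F})$ (the supporting line of $\mathrm{Conv}(\mathcal{C}_f(x_{\rm I})\cup\mathcal{C}_f(x_{\rm F}))$ touching both sets) touches them. Define the triangle region $$\mathcal{C}_{\rm IF}=\left\{(r_1,r_2): r_2\le k_{\rm IF}(r_1-r_1^{\rm I})+r_2^{\rm I},\ r_1\ge0,\ r_2\ge0\right\},\qquad k_{\rm IF}=\frac{r_2^{\rm I}-r_2^{\rm F}}{r_1^{\rm I}-r_1^{\rm F}}.$$ Then for any location $x\in[x_{\rm I},x_{\rm F}]$, $\mathcal{C}_f(x)\subseteq\mathrm{Conv}\big(\mathcal{C}_f(x_{\rm I})\cup\mathcal{C}_f(x_{\rm F})\big)$ if and only if $\mathcal{C}_f(x)\subseteq\mathcal{C}_{\rm IF}$.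
   Context: Fix $D>0$, $H>0$, $\beta_0>0$, $\bar P>0$. Ground users GU 1, GU 2 are at horizontal positions $x_1=-D/2$, $x_2=D/2$; for a UAV at horizontal position $x$ (altitude $H$), $h_k(x)=\beta_0/((x-x_k)^2+H^2)$. For $p_1,p_2\ge0$, $\mathcal{C}_{\rm MAC}(x,p_1,p_2)$ is the set of $(r_1,r_2)$, $r_1,r_2\ge0$, with $r_1\le\log_2(1+p_1h_1(x))$, $r_2\le\log_2(1+p_2h_2(x))$, $r_1+r_2\le\log_2(1+p_1h_1(x)+p_2h_2(x))$; the fixed-location capacity region is $\mathcal{C}_f(x)=\bigcup_{p_1,p_2\ge0,\,p_1+p_2\le\bar P}\mathcal{C}_{\rm MAC}(x,p_1,p_2)$ (a convex set). $\partial$ denotes boundary and $\mathrm{Conv}$ convex hull. *)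

(* Defs.v *)
From Stdlib Require Import Reals.
Open Scope R_scope.

Definition log2 (y : R) : R := ln y / ln 2.

(** Channel gain from GU at horizontal position xk to the UAV at x (altitude H). *)
Definition chan_gain (beta0 H xk x : R) : R := beta0 / ((x - xk) ^ 2 + H ^ 2).
Definition h1 (D H beta0 x : R) : R := chan_gain beta0 H (- D / 2) x.
Definition h2 (D H beta0 x : R) : R := chan_gain beta0 H (D / 2) x.

Definition rset := R * R -> Prop.

Definition C_MAC (D H beta0 x p1 p2 : R) : rset := fun r =>
  0 <= fst r /\ 0 <= snd r /\
  fst r <= log2 (1 + p1 * h1 D H beta0 x) /\
  snd r <= log2 (1 + p2 * h2 D H beta0 x) /\
  fst r + snd r <= log2 (1 + p1 * h1 D H beta0 x + p2 * h2 D H beta0 x).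

Definition C_f (D H beta0 Pbar x : R) : rset := fun r =>
  exists p1 p2, 0 <= p1 /\ 0 <= p2 /\ p1 + p2 <= Pbar /\ C_MAC D H beta0 x p1 p2 r.

Definition set_union (A B : rset) : rset := fun r => A r \/ B r.
Definition subset (A B : rset) : Prop := forall r, A r -> B r.

Definition convex2 (S : rset) : Prop :=
  forall p q t, S p -> S q -> 0 <= t <= 1 ->
    S (t * fst p + (1 - t) * fst q, t * snd p + (1 - t) * snd q).

Definition Conv (A : rset) : rset := fun p =>
  forall S, convex2 S -> subset A S -> S p.

(** pA, pB are the points where the upper-right common tangent line
    {w1 r1 + w2 r2 = c} (normal in the closed nonnegative quadrant, nonzero),
    a supporting line of Conv(A u B), touches A and B respectively. *)
Definition upper_right_common_tangent_points (A B : rset) (pA pB : R * R) : Prop :=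
  A pA /\ B pB /\
  exists w1 w2 c, 0 <= w1 /\ 0 <= w2 /\ (w1 <> 0 \/ w2 <> 0) /\
    (forall q, Conv (set_union A B) q -> w1 * fst q + w2 * snd q <= c) /\
    w1 * fst pA + w2 * snd pA = c /\
    w1 * fst pB + w2 * snd pB = c.

Definition k_IF (rI rF : R * R) : R := (snd rI - snd rF) / (fst rI - fst rF).
Definition C_IF (rI rF : R * R) : rset := fun r =>
  snd r <= k_IF rI rF * (fst r - fst rI) + snd rI /\ 0 <= fst r /\ 0 <= snd r.

(* Main.v *)
Require Import Defs.
From Stdlib Require Import Reals Lra Psatz.
Open Scope R_scope.

Definition E (r : R) : R := exp (r * ln 2).

Lemma ln2_pos : 0 < ln 2.
Proof. rewrite <- ln_1. apply ln_increasing; lra. Qed.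

Lemma E_pos r : 0 < E r.
Proof. apply exp_pos. Qed.

Lemma E_le r r' : r <= r' -> E r <= E r'.
Proof.
  intro h; unfold E. destruct (Req_dec r r') as [->|hn]; [lra|].
  left; apply exp_increasing. pose proof ln2_pos. nra.
Qed.

Lemma E_le_inv r r' : E r <= E r' -> r <= r'.
Proof.
  intro h. destruct (Rle_dec r r') as [|hn]; [auto|].
  assert (E r' < E r). { unfold E; apply exp_increasing. pose proof ln2_pos. nra. }
  lra.
Qed.

Lemma E_log2 y : 0 < y -> E (log2 y) = y.
Proof.
  intro hy. unfold E, log2. pose proof ln2_pos.
  replace (ln y / ln 2 * ln 2) with (ln y) by (field; lra). apply exp_ln; auto.
Qed.

Lemma log2_E r : log2 (E r) = r.
Proof. unfold log2, E. rewrite ln_exp. pose proof ln2_pos. field; lra. Qed.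

Lemma le_log2 r y : 0 < y -> (r <= log2 y <-> E r <= y).
Proof.
  intro hy. split; intro h.
  - rewrite <- (E_log2 y hy). apply E_le; auto.
  - rewrite <- (E_log2 y hy) in h. apply E_le_inv; auto.
Qed.

Lemma E_plus a b : E (a + b) = E a * E b.
Proof. unfold E. rewrite Rmult_plus_distr_r. apply exp_plus. Qed.

Lemma E_0 : E 0 = 1.
Proof. unfold E. rewrite Rmult_0_l. apply exp_0. Qed.

Lemma E_ge1 r : 0 <= r -> 1 <= E r.
Proof. intro h. rewrite <- E_0. apply E_le; auto. Qed.

Lemma log2_nonneg y : 1 <= y -> 0 <= log2 y.
Proof. intro h. apply le_log2; [lra|]. rewrite E_0; auto. Qed.

Definition Pm (al be u v : R) : R := al * u + be * v + Rmin al be * u * v.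

Lemma Cf_char D H beta0 P x s t :
  0 < h1 D H beta0 x -> 0 < h2 D H beta0 x ->
  (C_f D H beta0 P x (s, t) <->
   0 <= s /\ 0 <= t /\
   Pm (/ h1 D H beta0 x) (/ h2 D H beta0 x) (E s - 1) (E t - 1) <= P).
Proof.
  unfold C_f, C_MAC; simpl.
  generalize (h1 D H beta0 x) (h2 D H beta0 x). intros a b ha hb.
  assert (haa : / a * a = 1) by (field; lra).
  assert (hbb : / b * b = 1) by (field; lra).
  assert (0 < / a) by (apply Rinv_0_lt_compat; lra).
  assert (0 < / b) by (apply Rinv_0_lt_compat; lra).
  set (al := / a) in *. set (be := / b) in *.
  split.
  - intros (p1 & p2 & hp1 & hp2 & hs & h0s & h0t & h1' & h2' & h3').
    apply le_log2 in h1'; [|nra]. apply le_log2 in h2'; [|nra].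
    apply le_log2 in h3'; [|nra]. rewrite E_plus in h3'.
    split; [auto|split; [auto|]].
    pose proof (E_ge1 s h0s). pose proof (E_ge1 t h0t).
    set (u := E s - 1) in *. set (v := E t - 1) in *.
    assert (hu : E s = 1 + u) by (unfold u; ring).
    assert (hv : E t = 1 + v) by (unfold v; ring).
    rewrite hu, hv in *.
    unfold Pm. apply Rmin_case_strong; intro hm.
    +
      assert (h4 : u + u * v <= p1 * a + p2 * b - v) by nra.
      assert (h5 : al * (u + u * v) <= al * (p1 * a + p2 * b - v)) by (apply Rmult_le_compat_l; lra).
      assert (h6 : (be - al) * (p2 * b - v) >= 0) by nra.
      assert (al * (p1 * a) = p1) by (rewrite <- Rmult_assoc, (Rmult_comm al p1), Rmult_assoc, haa; ring).
      assert (be * (p2 * b) = p2) by (rewrite <- Rmult_assoc, (Rmult_comm be p2), Rmult_assoc, hbb; ring).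
      nra.
    + assert (h4 : v + u * v <= p1 * a + p2 * b - u) by nra.
      assert (h5 : be * (v + u * v) <= be * (p1 * a + p2 * b - u)) by (apply Rmult_le_compat_l; lra).
      assert (h6 : (al - be) * (p1 * a - u) >= 0) by nra.
      assert (al * (p1 * a) = p1) by (rewrite <- Rmult_assoc, (Rmult_comm al p1), Rmult_assoc, haa; ring).
      assert (be * (p2 * b) = p2) by (rewrite <- Rmult_assoc, (Rmult_comm be p2), Rmult_assoc, hbb; ring).
      nra.
  - intros (h0s & h0t & hP).
    pose proof (E_ge1 s h0s). pose proof (E_ge1 t h0t).
    assert (hu : E s = 1 + (E s - 1)) by ring.
    assert (hv : E t = 1 + (E t - 1)) by ring.
    set (u := E s - 1) in *. set (v := E t - 1) in *.
    assert (0 <= u) by (unfold u; lra). assert (0 <= v) by (unfold v; lra).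
    revert hP. unfold Pm. apply Rmin_case_strong; intros hm hP.
    + exists (al * (u * (1 + v))), (be * v).
      assert (e1 : al * (u * (1 + v)) * a = u * (1 + v)) by (rewrite Rmult_comm, <- Rmult_assoc, (Rmult_comm a al), haa; ring).
      assert (e2 : be * v * b = v) by (rewrite Rmult_comm, <- Rmult_assoc, (Rmult_comm b be), hbb; ring).
      split; [nra|]. split; [nra|]. split; [nra|].
      split; [auto|]. split; [auto|].
      rewrite !le_log2; try nra. rewrite E_plus. rewrite e1, e2. nra.
    + exists (al * u), (be * (v * (1 + u))).
      assert (e1 : al * u * a = u) by (rewrite Rmult_comm, <- Rmult_assoc, (Rmult_comm a al), haa; ring).
      assert (e2 : be * (v * (1 + u)) * b = v * (1 + u)) by (rewrite Rmult_comm, <- Rmult_assoc, (Rmult_comm b be), hbb; ring).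
      split; [nra|]. split; [nra|]. split; [nra|].
      split; [auto|]. split; [auto|].
      rewrite !le_log2; try nra. rewrite E_plus. rewrite e1, e2. nra.
Qed.

Lemma key (aI bI a b P U0 V0 u v : R) :
  0 < aI -> aI <= a -> 0 < b -> b <= bI -> 0 < P ->
  0 <= U0 -> U0 <= u -> 0 <= V0 -> 0 <= v ->
  Pm aI bI U0 V0 <= P ->
  P - a * U0 <= V0 * (b + Rmin a b * U0) ->
  Pm a b u v <= P -> Pm aI bI u v <= P.
Proof.
  intros haI haa hb hbb hP hU0 hu hV0 hv h1 hK h2.
  unfold Pm in *.
  set (m := Rmin a b) in *. set (mI := Rmin aI bI) in *.
  assert (hm0 : 0 < m) by (unfold m; apply Rmin_case; lra).
  assert (hmI0 : 0 < mI) by (unfold mI; apply Rmin_case; lra).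
  assert (hQ : a * mI - aI * m >= 0).
  { unfold m, mI. apply Rmin_case_strong; intro; apply Rmin_case_strong; intro; nra. }
  assert (hmm : bI = b -> m >= mI).
  { intro e. unfold m, mI. rewrite e. apply Rmin_case_strong; intro; apply Rmin_case_strong; intro; lra. }
  set (Dl := fun y => (P - aI * y) * (b + m * y) - (P - a * y) * (bI + mI * y)).
  assert (hD : forall y, Dl y = P * (b - bI) + (P * m - aI * b - P * mI + a * bI) * y + (a * mI - aI * m) * y * y).
  { intro y; unfold Dl; ring. }
  assert (hDU0 : Dl U0 >= 0).
  { unfold Dl.
    assert (i1 : V0 * (bI + mI * U0) <= P - aI * U0) by nra.
    assert (i2 : (P - a * U0) * (bI + mI * U0) <= V0 * (b + m * U0) * (bI + mI * U0)).
    { apply Rmult_le_compat_r; nra. }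
    assert (i3 : V0 * (bI + mI * U0) * (b + m * U0) <= (P - aI * U0) * (b + m * U0)).
    { apply Rmult_le_compat_r; nra. }
    nra. }
  set (L := P * m - aI * b - P * mI + a * bI) in *.
  set (Q := a * mI - aI * m) in *.
  assert (hDu : Dl u >= 0).
  { rewrite hD. rewrite hD in hDU0.
    destruct (Req_dec U0 0) as [e|ne].
    - subst U0. assert (bI = b) by nra.
      assert (L >= 0) by (unfold L; subst bI; pose proof (hmm eq_refl); nra).
      subst bI. nra.
    - assert (L + Q * U0 >= 0).
      { assert (U0 * (L + Q * U0) >= 0) by nra. nra. }
      assert (L + Q * u >= L + Q * U0) by nra.
      assert (u * (L + Q * u) >= U0 * (L + Q * U0)) by nra.
      nra. }
  assert (hPa : P - a * u >= 0).
  { assert (0 <= b * v) by (apply Rmult_le_pos; lra).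
    assert (0 <= m * u * v) by (apply Rmult_le_pos; [apply Rmult_le_pos|]; lra). lra. }
  unfold Dl in hDu.
  assert (i1 : v * (b + m * u) <= P - a * u) by nra.
  assert (i2 : v * (bI + mI * u) * (b + m * u) <= (P - a * u) * (bI + mI * u)).
  { replace (v * (bI + mI * u) * (b + m * u)) with (v * (b + m * u) * (bI + mI * u)) by ring.
    apply Rmult_le_compat_r; nra. }
  assert (i3 : v * (bI + mI * u) * (b + m * u) <= (P - aI * u) * (b + m * u)) by nra.
  assert (v * (bI + mI * u) <= P - aI * u).
  { apply (Rmult_le_reg_r (b + m * u)); nra. }
  nra.
Qed.

Lemma Pm_swap a b u v : Pm a b u v = Pm b a v u.
Proof. unfold Pm. rewrite Rmin_comm. ring. Qed.

Lemma Pm_mono a b u v u0 v0 : 0 < a -> 0 < b -> 0 <= u <= u0 -> 0 <= v <= v0 ->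
  Pm a b u v <= Pm a b u0 v0.
Proof.
  intros ha hb hu hv. unfold Pm.
  assert (0 < Rmin a b) by (apply Rmin_case; lra).
  assert (u * v <= u0 * v0) by nra.
  assert (Rmin a b * (u * v) <= Rmin a b * (u0 * v0)) by (apply Rmult_le_compat_l; lra).
  nra.
Qed.

Lemma h1_pos D H beta0 y : 0 < H -> 0 < beta0 -> 0 < h1 D H beta0 y.
Proof. intros. unfold h1, chan_gain. unfold Rdiv. apply Rmult_lt_0_compat; [lra|].
  apply Rinv_0_lt_compat. pose proof (pow2_ge_0 (y - - D / 2)). pose proof (pow_lt H 2 ltac:(lra)). lra. Qed.
Lemma h2_pos D H beta0 y : 0 < H -> 0 < beta0 -> 0 < h2 D H beta0 y.
Proof. intros. unfold h2, chan_gain. unfold Rdiv. apply Rmult_lt_0_compat; [lra|].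
  apply Rinv_0_lt_compat. pose proof (pow2_ge_0 (y - D / 2)). pose proof (pow_lt H 2 ltac:(lra)). lra. Qed.

Lemma al_eq D H beta0 y : 0 < H -> 0 < beta0 ->
  / h1 D H beta0 y = ((y + D / 2) ^ 2 + H ^ 2) / beta0.
Proof.
  intros. unfold h1, chan_gain.
  replace (y - - D / 2) with (y + D / 2) by field.
  field. split; [lra|]. pose proof (pow_lt H 2 ltac:(lra)). pose proof (pow2_ge_0 (y - D / 2)). pose proof (pow2_ge_0 (y + D / 2)). lra.
Qed.
Lemma be_eq D H beta0 y : 0 < H -> 0 < beta0 ->
  / h2 D H beta0 y = ((y - D / 2) ^ 2 + H ^ 2) / beta0.
Proof.
  intros. unfold h2, chan_gain. field. split; [lra|]. pose proof (pow_lt H 2 ltac:(lra)). pose proof (pow2_ge_0 (y - D / 2)). pose proof (pow2_ge_0 (y + D / 2)). lra.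
Qed.

Lemma div_le_b a b c : 0 < c -> a <= b -> a / c <= b / c.
Proof. intros. unfold Rdiv. apply Rmult_le_compat_r; [left; apply Rinv_0_lt_compat|]; lra. Qed.
Lemma div_lt_b a b c : 0 < c -> a < b -> a / c < b / c.
Proof. intros. unfold Rdiv. apply Rmult_lt_compat_r; [apply Rinv_0_lt_compat|]; lra. Qed.

Lemma DC D H beta0 P y s0 t0 s t : 0 < H -> 0 < beta0 ->
  C_f D H beta0 P y (s0, t0) -> 0 <= s <= s0 -> 0 <= t <= t0 -> C_f D H beta0 P y (s, t).
Proof.
  intros hH hb h hs ht.
  pose proof (h1_pos D H beta0 y hH hb). pose proof (h2_pos D H beta0 y hH hb).
  apply Cf_char in h; auto. apply Cf_char; auto.
  destruct h as (_ & _ & h). split; [lra|]. split; [lra|].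
  eapply Rle_trans; [|exact h]. apply Pm_mono.
  - apply Rinv_0_lt_compat; auto.
  - apply Rinv_0_lt_compat; auto.
  - pose proof (E_ge1 s (proj1 hs)). pose proof (E_le _ _ (proj2 hs)). lra.
  - pose proof (E_ge1 t (proj1 ht)). pose proof (E_le _ _ (proj2 ht)). lra.
Qed.

Theorem lemma5 (D H beta0 Pbar : R)
  (hD : 0 < D) (hH : 0 < H) (hbeta0 : 0 < beta0) (hP : 0 < Pbar)
  (xI xF : R) (hxI : - D / 2 <= xI) (hIF : xI < xF) (hxF : xF <= D / 2)
  (rI rF : R * R)
  (htan : upper_right_common_tangent_points
            (C_f D H beta0 Pbar xI) (C_f D H beta0 Pbar xF) rI rF)
  (hk : fst rI <> fst rF)
  (x : R) (hx : xI <= x <= xF) :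
  subset (C_f D H beta0 Pbar x)
         (Conv (set_union (C_f D H beta0 Pbar xI) (C_f D H beta0 Pbar xF)))
  <-> subset (C_f D H beta0 Pbar x) (C_IF rI rF).
Proof.
  destruct rI as [rho tau], rF as [rhoF tauF]. simpl in hk.
  destruct htan as (hA & hB & w1 & w2 & c & hw1 & hw2 & hnz & hsup & hlI & hlF).
  simpl in hlI, hlF.
  assert (hw2p : 0 < w2).
  { destruct (Req_dec w2 0) as [e|]; [|lra]. subst w2.
    destruct hnz as [h|h]; [|lra]. exfalso; apply hk.
    apply (Rmult_eq_reg_l w1); lra. }
  assert (hCIF : forall s t, C_IF (rho, tau) (rhoF, tauF) (s, t) <->
                   w1 * s + w2 * t <= c /\ 0 <= s /\ 0 <= t).
  { intros s t. unfold C_IF, k_IF; simpl.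
    assert (hd : rho - rhoF <> 0) by lra.
    assert (e : tau - tauF = - w1 / w2 * (rho - rhoF)).
    { apply (Rmult_eq_reg_l w2); [|lra]. unfold Rdiv.
      replace (w2 * (- w1 * / w2 * (rho - rhoF))) with (- w1 * (rho - rhoF)) by (field; lra).
      lra. }
    rewrite e. replace (- w1 / w2 * (rho - rhoF) / (rho - rhoF)) with (- w1 / w2) by (field; lra).
    assert (e2 : w2 * (- w1 / w2 * (s - rho) + tau) = c - w1 * s) by (field_simplify; lra).
    split; intros (h1' & h2' & h3'); (split; [|split; auto]).
    - apply (Rmult_le_compat_l w2) in h1'; lra.
    - apply (Rmult_le_reg_l w2); lra. }
  pose proof (fun y => h1_pos D H beta0 y hH hbeta0) as hp1.
  pose proof (fun y => h2_pos D H beta0 y hH hbeta0) as hp2.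
  assert (conv_in : forall r, C_f D H beta0 Pbar xI r \/ C_f D H beta0 Pbar xF r ->
            Conv (set_union (C_f D H beta0 Pbar xI) (C_f D H beta0 Pbar xF)) r).
  { intros r hr S _ hS. apply hS. exact hr. }
  assert (mA1 : / h1 D H beta0 xI <= / h1 D H beta0 x).
  { rewrite !al_eq; auto. apply div_le_b; auto. nra. }
  assert (mA2 : / h1 D H beta0 x <= / h1 D H beta0 xF).
  { rewrite !al_eq; auto. apply div_le_b; auto. nra. }
  assert (mB1 : / h2 D H beta0 x <= / h2 D H beta0 xI).
  { rewrite !be_eq; auto. apply div_le_b; auto. nra. }
  assert (mB2 : / h2 D H beta0 xF <= / h2 D H beta0 x).
  { rewrite !be_eq; auto. apply div_le_b; auto. nra. }
  assert (mBs : / h2 D H beta0 xF < / h2 D H beta0 xI).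
  { rewrite !be_eq; auto. apply div_lt_b; auto. nra. }
  assert (ipos1 : forall y, 0 < / h1 D H beta0 y) by (intro; apply Rinv_0_lt_compat; auto).
  assert (ipos2 : forall y, 0 < / h2 D H beta0 y) by (intro; apply Rinv_0_lt_compat; auto).
  split.
  - intros hsub [s t] hr. apply hCIF. split.
    + apply (hsup (s, t)). apply hsub, hr.
    + apply Cf_char in hr; auto. tauto.
  - intros hsub.
    assert (hC : forall s t, C_f D H beta0 Pbar x (s, t) -> w1 * s + w2 * t <= c).
    { intros s t h. apply hsub in h. apply hCIF in h. tauto. }

    set (alI := / h1 D H beta0 xI) in *. set (al := / h1 D H beta0 x) in *.
    set (alF := / h1 D H beta0 xF) in *. set (beI := / h2 D H beta0 xI) in *.
    set (be := / h2 D H beta0 x) in *. set (beF := / h2 D H beta0 xF) in *.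
    pose proof (ipos1 xI) as pa1. pose proof (ipos1 x) as pa. pose proof (ipos1 xF) as pa2.
    pose proof (ipos2 xI) as pb1. pose proof (ipos2 x) as pb. pose proof (ipos2 xF) as pb2.
    fold alI al alF beI be beF in pa1, pa, pa2, pb1, pb, pb2.
    pose proof hA as hA'. pose proof hB as hB'.
    apply Cf_char in hA'; auto. apply Cf_char in hB'; auto.
    fold alI beI in hA'. fold alF beF in hB'.
    destruct hA' as (hrho & htau & hPA). destruct hB' as (hrhoF & htauF & hPB).
    pose proof (E_ge1 _ hrho). pose proof (E_ge1 _ htau).
    pose proof (E_ge1 _ hrhoF). pose proof (E_ge1 _ htauF).
    assert (hw1p : 0 < w1).
    { destruct (Req_dec w1 0) as [e|]; [|lra]. exfalso. subst w1.
      assert (hq : C_f D H beta0 Pbar xF (0, log2 (1 + Pbar * h2 D H beta0 xF))).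
      { pose proof (hp2 xF). apply Cf_char; auto. split; [lra|]. split.
        - apply log2_nonneg. nra.
        - rewrite E_0, E_log2 by nra. fold beF. unfold Pm.
          replace (1 + Pbar * h2 D H beta0 xF - 1) with (Pbar * h2 D H beta0 xF) by ring.
          replace (beF * (Pbar * h2 D H beta0 xF)) with Pbar by (unfold beF; field; pose proof (hp2 xF); lra).
          lra. }
      assert (hq2 := hsup _ (conv_in _ (or_intror hq))). simpl in hq2.
      assert (hl : log2 (1 + Pbar * h2 D H beta0 xF) <= tau).
      { apply (Rmult_le_reg_l w2); lra. }
      pose proof (hp2 xF).
      apply E_le in hl. rewrite E_log2 in hl by nra.
      unfold Pm in hPA.
      assert (0 < Rmin alI beI) by (apply Rmin_case; lra).
      assert (0 <= Rmin alI beI * (E rho - 1) * (E tau - 1)).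
      { apply Rmult_le_pos; [apply Rmult_le_pos|]; lra. }
      assert (0 <= alI * (E rho - 1)) by (apply Rmult_le_pos; lra).
      assert (beI * (E tau - 1) <= Pbar) by lra.
      assert (beI * (Pbar * h2 D H beta0 xF) <= Pbar).
      { eapply Rle_trans; [|eassumption]. apply Rmult_le_compat_l; lra. }
      assert (beF * h2 D H beta0 xF = 1) by (unfold beF; field; lra).
      assert (beI * h2 D H beta0 xF <= 1).
      { apply (Rmult_le_reg_l Pbar); nra. }
      nra. }
    intros [s t] hr.
    pose proof hr as hr'. apply Cf_char in hr'; auto. fold al be in hr'.
    destruct hr' as (hs & ht & hPx).
    pose proof (E_ge1 _ hs). pose proof (E_ge1 _ ht).
    destruct (Rle_dec rho s) as [hsr|hsr].
    {
      apply conv_in; left. apply Cf_char; auto. fold alI beI.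
      split; [auto|split; [auto|]].
      apply (key alI beI al be Pbar (E rho - 1) (E tau - 1)); try lra.
      - pose proof (E_le _ _ hsr). lra.
      - destruct (Rle_dec (Pbar - al * (E rho - 1)) ((E tau - 1) * (be + Rmin al be * (E rho - 1)))) as [|hn]; [auto|].
        apply Rnot_le_lt in hn. exfalso.
        assert (hm : 0 < Rmin al be) by (apply Rmin_case; lra).
        set (den := be + Rmin al be * (E rho - 1)) in *.
        assert (hden : 0 < den) by (unfold den; nra).
        set (v' := (Pbar - al * (E rho - 1)) / den).
        assert (ev : v' * den = Pbar - al * (E rho - 1)) by (unfold v'; field; lra).
        assert (hv' : E tau - 1 < v') by nra.
        assert (hq : C_f D H beta0 Pbar x (rho, log2 (1 + v'))).
        { apply Cf_char; auto. fold al be. split; [auto|]. split.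
          - apply log2_nonneg. lra.
          - rewrite E_log2 by lra. unfold Pm.
            replace (1 + v' - 1) with v' by ring. unfold den in ev. nra. }
        apply hC in hq.
        assert (hl : log2 (1 + v') <= tau) by (apply (Rmult_le_reg_l w2); lra).
        apply E_le in hl. rewrite E_log2 in hl by lra. lra. }
    apply Rnot_le_lt in hsr.
    destruct (Rle_dec tauF t) as [htr|htr].
    {
      apply conv_in; right. apply Cf_char; auto. fold alF beF.
      split; [auto|split; [auto|]].
      rewrite Pm_swap. rewrite Pm_swap in hPB, hPx.
      apply (key beF alF be al Pbar (E tauF - 1) (E rhoF - 1)); try lra.
      - pose proof (E_le _ _ htr). lra.
      - destruct (Rle_dec (Pbar - be * (E tauF - 1)) ((E rhoF - 1) * (al + Rmin be al * (E tauF - 1)))) as [|hn]; [auto|].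
        apply Rnot_le_lt in hn. exfalso.
        assert (hm : 0 < Rmin be al) by (apply Rmin_case; lra).
        set (den := al + Rmin be al * (E tauF - 1)) in *.
        assert (hden : 0 < den) by (unfold den; nra).
        set (u' := (Pbar - be * (E tauF - 1)) / den).
        assert (ev : u' * den = Pbar - be * (E tauF - 1)) by (unfold u'; field; lra).
        assert (hu' : E rhoF - 1 < u') by nra.
        assert (hq : C_f D H beta0 Pbar x (log2 (1 + u'), tauF)).
        { apply Cf_char; auto. fold al be. split; [|split; [auto|]].
          - apply log2_nonneg. lra.
          - rewrite E_log2 by lra. rewrite Pm_swap. unfold Pm.
            replace (1 + u' - 1) with u' by ring. unfold den in ev. nra. }
        apply hC in hq.
        assert (hl : log2 (1 + u') <= rhoF) by (apply (Rmult_le_reg_l w1); lra).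
        apply E_le in hl. rewrite E_log2 in hl by lra. lra. }
    apply Rnot_le_lt in htr.
    destruct (Rle_dec s rhoF) as [hs2|hs2].
    { apply conv_in; right. apply (DC D H beta0 Pbar xF rhoF tauF); auto; lra. }
    destruct (Rle_dec t tau) as [ht2|ht2].
    { apply conv_in; left. apply (DC D H beta0 Pbar xI rho tau); auto; lra. }
    apply Rnot_le_lt in hs2. apply Rnot_le_lt in ht2.
    assert (hwr := hC _ _ hr).
    set (lam := (s - rhoF) / (rho - rhoF)).
    assert (hlam0 : 0 < lam) by (unfold lam; apply Rdiv_lt_0_compat; lra).
    assert (hlam1 : lam < 1).
    { unfold lam. apply (Rmult_lt_reg_r (rho - rhoF)); [lra|].
      unfold Rdiv. rewrite Rmult_assoc, Rinv_l by lra. lra. }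
    assert (es : lam * rho + (1 - lam) * rhoF = s) by (unfold lam; field; lra).
    set (z := (t - lam * tau) / (1 - lam)).
    assert (ez : lam * tau + (1 - lam) * z = t) by (unfold z; field; lra).
    assert (hc : c = w1 * s + w2 * (lam * tau + (1 - lam) * tauF)).
    { rewrite <- es. replace c with (lam * c + (1 - lam) * c) by ring.
      rewrite <- hlI at 1. rewrite <- hlF. ring. }
    assert (htz : t <= lam * tau + (1 - lam) * tauF).
    { apply (Rmult_le_reg_l w2); lra. }
    assert (hz1 : tau <= z) by nra.
    assert (hz2 : z <= tauF) by nra.
    intros S hS hsub2.
    assert (hp : S (rho, tau)) by (apply hsub2; left; exact hA).
    assert (hq : S (rhoF, z)).
    { apply hsub2; right. apply (DC D H beta0 Pbar xF rhoF tauF); auto; lra. }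
    pose proof (hS _ _ lam hp hq ltac:(lra)) as hh. simpl in hh.
    rewrite es, ez in hh. exact hh.
Qed.
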